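(* Let $A\subset\mathbb{R}^n$ and let $w\in\mathbb{R}^n$ be such that $0\notin\overline A$ and $w\notin\overline A$. Let $\Phi(x)=\frac{x}{|x|^2}$ be the geometric inversion with respect to the origin and $\Psi(x)=\frac{x-w}{|x-w|^2}$ the geometric inversion with respect to the point $w$. Then $f=\Psi\circ\Phi:\Phi(A)\to\Psi(A)$ is a bi-Lipschitz mapping. In particular, $\overline{\dim}_B\Phi(A)=\overline{\dim}_B\Psi(A)$ and $\underline{\dim}_B\Phi(A)=\underline{\dim}_B\Psi(A)$.
   Context: $|\cdot|$ denotes the Euclidean norm. A map $f$ is bi-Lipschitz if there are constants $c_1,c_2>0$ with $c_1|a-b|\le|f(a)-f(b)|\le c_2|a-b|$ for all $a,b$ in its domain. For a nonempty bounded set $B\subset\mathbb{R}^n$, with $B_\varepsilon$ its Euclidean $\varepsilon$-neighbourhood and $|B_\varepsilon|$ its $n$-dimensional Lebesgue measure, the upper (resp. lower) $s$-dimensional Minkowski content is $\mathcal M^{*s}(B)=\limsup_{\varepsilon\to0}|B_\varepsilon|/\varepsilon^{n-s}$ (resp. $\mathcal M_*^s(B)$ with $\liminf$), and the upper (resp. lower) box dimension is $\overline{\dim}_BB=\inf\{s\ge0:\mathcal M^{*s}(B)=0\}$ (resp. $\underline{\dim}_BB=\inf\{s\ge0:\mathcal M_*^{s}(B)=0\}$). *)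

(* Defs.v *)
From mathcomp Require Import all_boot all_order all_algebra.
From mathcomp Require Import all_classical all_reals all_analysis.
Set Implicit Arguments. Unset Strict Implicit. Unset Printing Implicit Defensive.
Import Order.TTheory GRing.Theory Num.Theory.
Import numFieldNormedType.Exports.
Local Open Scope classical_set_scope.
Local Open Scope ring_scope.

Section Defs.
Variables (R : realType) (n : nat).
Local Notation V := 'rV[R]_n.

Definition enorm (x : V) : R := Num.sqrt (\sum_(i < n) x ord0 i ^+ 2).

Definition inversion (w x : V) : V := (enorm (x - w) ^+ 2)^-1 *: (x - w).

Definition bi_lipschitz_on (D : set V) (f : V -> V) : Prop :=
  exists c1 c2 : R, 0 < c1 /\ 0 < c2 /\
    forall a b, D a -> D b ->
      c1 * enorm (a - b) <= enorm (f a - f b) /\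
      enorm (f a - f b) <= c2 * enorm (a - b).

Definition box (a b : V) : set V := [set x | forall i, a ord0 i <= x ord0 i <= b ord0 i].
Definition box_vol (a b : V) : R := \prod_(i < n) Num.max 0 (b ord0 i - a ord0 i).

Definition lebesgue_outer (E : set V) : \bar R :=
  ereal_inf [set x : \bar R | exists (a b : nat -> V),
     E `<=` \bigcup_k box (a k) (b k) /\
     x = (\sum_(0 <= k <oo) (box_vol (a k) (b k))%:E)%E].

Definition eps_nbhd (B : set V) (e : R) : set V :=
  [set x | exists2 b, B b & enorm (x - b) < e].

Definition mink_ratio (B : set V) (s e : R) : \bar R :=
  (lebesgue_outer (eps_nbhd B e) * ((e `^ (n%:R - s))^-1)%:E)%E.

(** upper / lower s-dimensional Minkowski content: limsup / liminf as e -> 0+ *)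
Definition upper_minkowski (B : set V) (s : R) : \bar R :=
  ereal_inf [set ereal_sup [set mink_ratio B s e | e in [set e : R | 0 < e < d]]
            | d in [set d : R | 0 < d]].
Definition lower_minkowski (B : set V) (s : R) : \bar R :=
  ereal_sup [set ereal_inf [set mink_ratio B s e | e in [set e : R | 0 < e < d]]
            | d in [set d : R | 0 < d]].

Definition upper_box_dim (B : set V) : \bar R :=
  ereal_inf [set s%:E | s in [set s : R | 0 <= s /\ upper_minkowski B s = 0%E]].
Definition lower_box_dim (B : set V) : \bar R :=
  ereal_inf [set s%:E | s in [set s : R | 0 <= s /\ lower_minkowski B s = 0%E]].

End Defs.

(* Main.v *)
Require Import Defs.
From mathcomp Require Import all_boot all_order all_algebra.
From mathcomp Require Import all_classical all_reals all_analysis.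
From mathcomp Require Import ring lra zify.
From Stdlib Require Import Lia.
Import Order.TTheory GRing.Theory Num.Theory.
Import numFieldNormedType.Exports.
Local Open Scope classical_set_scope.
Local Open Scope ring_scope.
Set Implicit Arguments. Unset Strict Implicit. Unset Printing Implicit Defensive.
Section Enorm.
Variables (R : realType) (n : nat).
Local Notation V := 'rV[R]_n.
Implicit Types x y z : V.

Definition dot (x y : V) : R := \sum_(i < n) x ord0 i * y ord0 i.

Lemma dotC x y : dot x y = dot y x.
Proof. by rewrite /dot; apply: eq_bigr => i _; rewrite mulrC. Qed.
Lemma dotDl x y z : dot (x + y) z = dot x z + dot y z.
Proof. by rewrite /dot -big_split; apply: eq_bigr => i _; rewrite !mxE mulrDl. Qed.
Lemma dotNl x y : dot (- x) y = - dot x y.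
Proof. by rewrite /dot -sumrN; apply: eq_bigr => i _; rewrite !mxE mulNr. Qed.
Lemma dotZl c x y : dot (c *: x) y = c * dot x y.
Proof. by rewrite /dot mulr_sumr; apply: eq_bigr => i _; rewrite !mxE mulrA. Qed.
Lemma dotBl x y z : dot (x - y) z = dot x z - dot y z.
Proof. by rewrite dotDl dotNl. Qed.
Lemma dotDr x y z : dot z (x + y) = dot z x + dot z y.
Proof. by rewrite dotC dotDl !(dotC z). Qed.
Lemma dotBr x y z : dot z (x - y) = dot z x - dot z y.
Proof. by rewrite dotC dotBl !(dotC z). Qed.
Lemma dotZr c x y : dot y (c *: x) = c * dot y x.
Proof. by rewrite dotC dotZl dotC. Qed.
Lemma dot_ge0 x : 0 <= dot x x.
Proof. by rewrite /dot; apply: sumr_ge0 => i _; rewrite -expr2 sqr_ge0. Qed.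
Lemma dot0r x : dot 0 x = 0.
Proof. by rewrite /dot big1 // => i _; rewrite mxE mul0r. Qed.

Lemma enormE x : enorm x = Num.sqrt (dot x x).
Proof. by rewrite /enorm /dot; congr Num.sqrt; apply: eq_bigr => i _; rewrite expr2. Qed.
Lemma enorm_sqr x : enorm x ^+ 2 = dot x x.
Proof. by rewrite enormE sqr_sqrtr // dot_ge0. Qed.
Lemma enorm_ge0 x : 0 <= enorm x.
Proof. exact: sqrtr_ge0. Qed.
Lemma enorm0 : enorm (0 : V) = 0.
Proof. by rewrite enormE dot0r sqrtr0. Qed.
Lemma enorm_eq0 (x : V) : enorm x = 0 -> x = 0.
Proof.
rewrite enormE => /eqP; rewrite sqrtr_eq0 => h.
have h0 : dot x x = 0 by apply/le_anti; rewrite h dot_ge0.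
apply/matrixP => i j; rewrite (ord1 i) mxE.
have hj : x ord0 j * x ord0 j = 0.
  apply: (@psumr_eq0P R _ xpredT (fun i => x ord0 i * x ord0 i) _ h0 j isT).
  by move=> k _; rewrite -expr2 sqr_ge0.
by apply/eqP; rewrite -[_ == 0]orbb -mulf_eq0 hj.
Qed.
Lemma enorm_gt0 (x : V) : x != 0 -> 0 < enorm x.
Proof.
move=> x0; rewrite lt_neqAle enorm_ge0 andbT eq_sym; apply/eqP => /enorm_eq0.
by apply/eqP.
Qed.
Lemma enormZ c x : enorm (c *: x) = `|c| * enorm x.
Proof.
by rewrite !enormE dotZl dotZr mulrA -expr2 sqrtrM ?sqr_ge0 // sqrtr_sqr.
Qed.
Lemma enormN x : enorm (- x) = enorm x.
Proof. by rewrite -scaleN1r enormZ normrN normr1 mul1r. Qed.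
Lemma enormB x y : enorm (x - y) = enorm (y - x).
Proof. by rewrite -enormN opprB. Qed.

Lemma dot_expand x y : dot (x + y) (x + y) = dot x x + 2 * dot x y + dot y y.
Proof. by rewrite !dotDl !dotDr (dotC y x); ring. Qed.

Lemma CS x y : dot x y <= enorm x * enorm y.
Proof.
have [y0|y0] := eqVneq (dot y y) 0.
  have -> : y = 0 by apply: enorm_eq0; rewrite enormE y0 sqrtr0.
  by rewrite dotC dot0r enorm0 mulr0.
set t := dot x y / dot y y.
have := dot_ge0 (x + (- t) *: y).
rewrite dot_expand dotZr dotZl dotZr mulrA => h.
have h2 : dot x y ^+ 2 <= dot x x * dot y y.
  have yp : 0 < dot y y by rewrite lt_neqAle eq_sym y0 dot_ge0.
  move: h => h.
  have e : dot x x + 2 * - (dot x y / dot y y) * dot x y +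
    - (dot x y / dot y y) * - (dot x y / dot y y) * dot y y =
    (dot x x * dot y y - dot x y ^+ 2) / dot y y.
    by field; rewrite y0.
  by move: h; rewrite /t mulrA e pmulr_lge0 ?invr_gt0 // subr_ge0.
apply: (le_trans (ler_norm (dot x y))).
by rewrite !enormE -sqrtrM ?dot_ge0 // -sqrtr_sqr ler_wsqrtr.
Qed.

Lemma enormD_le x y : enorm (x + y) <= enorm x + enorm y.
Proof.
rewrite {1}enormE -[enorm x + enorm y]ger0_norm ?addr_ge0 ?enorm_ge0 //.
rewrite -sqrtr_sqr ler_wsqrtr // dot_expand sqrrD !enorm_sqr.
rewrite lerD2r lerD2l; have := CS x y; lra.
Qed.
Lemma enormB_le x y : enorm (x - y) <= enorm x + enorm y.
Proof. by rewrite (le_trans (enormD_le _ _)) // enormN. Qed.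
Lemma enorm_tri x y z : enorm (x - z) <= enorm (x - y) + enorm (y - z).
Proof. by rewrite (le_trans _ (enormD_le _ _)) // addrA subrK. Qed.
Lemma enorm_rev_tri x y : enorm x - enorm y <= enorm (x - y).
Proof.
rewrite lerBlDr; have := enormD_le (x - y) y; by rewrite subrK.
Qed.

Lemma coord_le x i : `|x ord0 i| <= enorm x.
Proof.
rewrite enormE -sqrtr_sqr ler_wsqrtr // /dot (bigD1 i) //= -expr2 lerDl.
by apply: sumr_ge0 => k _; rewrite -expr2 sqr_ge0.
Qed.

Lemma enorm_le_coord x h : 0 <= h -> (forall i, `|x ord0 i| <= h) ->
  enorm x <= n%:R * h.
Proof.
move=> h0 hx; rewrite enormE.
rewrite -[n%:R * h]ger0_norm ?mulr_ge0 // -sqrtr_sqr ler_wsqrtr //.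
apply: (@le_trans _ _ (\sum_(i < n) h ^+ 2)).
  rewrite /dot; apply: ler_sum => i _; rewrite -expr2 -real_normK ?num_real //.
  by rewrite lerXn2r // ?nnegrE ?normr_ge0.
rewrite sumr_const card_ord exprMn -[h ^+ 2 *+ n]mulr_natl ler_wpM2r ?sqr_ge0 //.
case: n => [|m]; first by rewrite expr2 mulr0.
by rewrite expr2 ler_peMr // ler1n.
Qed.

End Enorm.
Ltac nzt := repeat (apply/andP; split); apply: lt0r_neq0; assumption.

Section Inversion.
Variables (R : realType) (n : nat).
Local Notation V := 'rV[R]_n.
Implicit Types x y z a b w : V.
Local Notation Phi := (@inversion R n 0).

Lemma PhiE x : Phi x = (enorm x ^+ 2)^-1 *: x.
Proof. by rewrite /inversion subr0. Qed.
Lemma invE w x : inversion w x = Phi (x - w).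
Proof. by rewrite PhiE. Qed.

Lemma dot_sub_expand x y : dot (x - y) (x - y) = dot x x - 2 * dot x y + dot y y.
Proof. by rewrite !dotBl !dotBr (dotC y x); ring. Qed.

Lemma sqr_inj (u v : R) : 0 <= u -> 0 <= v -> u ^+ 2 = v ^+ 2 -> u = v.
Proof. by move=> u0 v0 /eqP; rewrite eqrXn2 // => /eqP. Qed.

Lemma enorm_Phi x : enorm (Phi x) = (enorm x)^-1.
Proof.
rewrite PhiE enormZ ger0_norm ?invr_ge0 ?sqr_ge0 //.
have [x0|x0] := eqVneq x 0; first by rewrite x0 enorm0 invr0 mulr0.
have := enorm_gt0 x0 => h; rewrite expr2 invfM -mulrA mulVf ?mulr1 //.
by rewrite gt_eqF.
Qed.

Lemma PhiK x : Phi (Phi x) = x.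
Proof.
have [x0|x0] := eqVneq x 0; first by rewrite x0 [Phi 0]PhiE scaler0 PhiE scaler0.
rewrite [Phi (Phi x)]PhiE enorm_Phi [Phi x]PhiE scalerA.
have := enorm_gt0 x0 => h.
by rewrite exprVn invrK mulfV ?scale1r // expf_neq0 // gt_eqF.
Qed.

Lemma Phi_eq0 x : (Phi x == 0) = (x == 0).
Proof.
apply/eqP/eqP => [h|->]; last by rewrite PhiE scaler0.
by rewrite -(PhiK x) h PhiE scaler0.
Qed.

Lemma PhiN x : Phi (- x) = - Phi x.
Proof. by rewrite !PhiE enormN scalerN. Qed.

Lemma Phi_dist a b : a != 0 -> b != 0 ->
  enorm (Phi a - Phi b) = enorm (a - b) / (enorm a * enorm b).
Proof.
move=> a0 b0; have ha := enorm_gt0 a0; have hb := enorm_gt0 b0.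
apply: sqr_inj; rewrite ?enorm_ge0 ?divr_ge0 ?mulr_ge0 ?enorm_ge0 //.
rewrite expr_div_n !enorm_sqr !dot_sub_expand !PhiE !(dotZl, dotZr).
rewrite exprMn !enorm_sqr.
have da : dot a a != 0 by rewrite -enorm_sqr expf_neq0 // gt_eqF.
have db : dot b b != 0 by rewrite -enorm_sqr expf_neq0 // gt_eqF.
by field; rewrite da db.
Qed.

Lemma enorm_Phi_sub w y : w != 0 -> y != 0 ->
  enorm (Phi y - w) = enorm w * enorm (y - Phi w) / enorm y.
Proof.
move=> w0 y0.
have w'0 : Phi w != 0 by rewrite Phi_eq0.
rewrite -{1}(PhiK w) Phi_dist // enorm_Phi.
have := enorm_gt0 w0; have := enorm_gt0 y0 => hy hw.
by field; nzt.
Qed.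

Definition G w y : V := if y == 0 then 0 else Phi (Phi y - w).

Lemma G_Phi w a : a != 0 -> G w (Phi a) = inversion w a.
Proof. by move=> a0; rewrite /G Phi_eq0 (negbTE a0) PhiK [inversion w a]invE. Qed.

Lemma G_inv w a : a != w -> G (- w) (inversion w a) = Phi a.
Proof.
move=> aw; have aw0 : a - w != 0 by rewrite subr_eq0.
by rewrite [inversion w a]invE /G Phi_eq0 (negbTE aw0) PhiK opprK subrK.
Qed.

Lemma GK w y : y != - Phi w -> G w (G (- w) y) = y.
Proof.
move=> yw; rewrite /G.
have [y0|y0] := eqVneq y 0; first by rewrite eqxx.
have u0 : Phi y - - w != 0.
  rewrite opprK; apply: contra yw; rewrite addr_eq0 => /eqP h.
  by rewrite -(PhiK y) h PhiN.
by rewrite Phi_eq0 (negbTE u0) PhiK opprK addrK PhiK.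
Qed.

Lemma G_dist w y z : w != 0 -> y != Phi w -> z != Phi w ->
  enorm (G w y - G w z) =
  enorm (y - z) / (enorm w ^+ 2 * enorm (y - Phi w) * enorm (z - Phi w)).
Proof.
move=> w0 yw zw.
have hw := enorm_gt0 w0.
have hy' : 0 < enorm (y - Phi w) by rewrite enorm_gt0 // subr_eq0.
have hz' : 0 < enorm (z - Phi w) by rewrite enorm_gt0 // subr_eq0.
have ew' : enorm (Phi w) = (enorm w)^-1 by rewrite enorm_Phi.
have nz u : u != 0 -> u != Phi w -> Phi u - w != 0.
  move=> u0 uw; rewrite subr_eq0; apply: contra uw => /eqP h.
  by rewrite -h PhiK.
rewrite /G; have [y0|y0] := eqVneq y 0; have [z0|z0] := eqVneq z 0.
- by rewrite y0 z0 !subrr enorm0 mul0r.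
- rewrite sub0r enormN enorm_Phi enorm_Phi_sub // y0 !sub0r !enormN ew'.
  have := enorm_gt0 z0 => hz.
  by field; nzt.
- rewrite subr0 enorm_Phi enorm_Phi_sub // z0 !subr0 sub0r enormN ew'.
  have := enorm_gt0 y0 => hy.
  by field; nzt.
- rewrite Phi_dist ?nz // opprB addrA subrK Phi_dist //.
  rewrite !enorm_Phi_sub //.
  have := enorm_gt0 y0; have := enorm_gt0 z0 => hz hy.
  by field; nzt.
Qed.

End Inversion.
Section Outer.
Variables (R : realType) (n : nat).
Local Notation V := 'rV[R]_n.
Implicit Types E F : set V.

Lemma box_vol_ge0 (a b : V) : 0 <= box_vol a b.
Proof. by apply: prodr_ge0 => i _; rewrite le_max lexx. Qed.

Lemma outer_le_cover E (a b : nat -> V) : E `<=` \bigcup_k box (a k) (b k) ->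
  (lebesgue_outer E <= \sum_(0 <= k <oo) (box_vol (a k) (b k))%:E)%E.
Proof. by move=> h; apply: ereal_inf_lbound; exists a, b. Qed.

Lemma outer_ge0 E : (0 <= lebesgue_outer E)%E.
Proof.
apply: le_ereal_inf_tmp => _ [a [b [_ ->]]].
by apply: nneseries_ge0 => k _ _; rewrite lee_fin box_vol_ge0.
Qed.

Lemma outer_mono E F : E `<=` F -> (lebesgue_outer E <= lebesgue_outer F)%E.
Proof.
move=> EF; apply: le_ereal_inf => x [a [b [Fc ->]]]; exists a, b; split => //.
exact: subset_trans Fc.
Qed.

Definition pre (s : nat -> seq (V * V)) K := flatten (map s (iota 0 K)).

Lemma preS s K : pre s K.+1 = pre s K ++ s K.
Proof. by rewrite /pre -[K.+1]addn1 iotaD map_cat flatten_cat /= cats0. Qed.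

Lemma pre_size s K : (forall k, s k != [::]) -> (K <= size (pre s K))%N.
Proof.
move=> ne; elim: K => // K IH; rewrite preS size_cat.
have : (0 < size (s K))%N by rewrite lt0n size_eq0.
by move=> h; rewrite -[K.+1]addn1 leq_add.
Qed.

Lemma pre_prefix s K K' : (K <= K')%N -> exists r, pre s K' = pre s K ++ r.
Proof.
move/subnK <-; elim: (K' - K)%N => [|m [r IH]].
  by exists [::]; rewrite add0n cats0.
by exists (r ++ s (m + K)%N); rewrite addSn preS IH catA.
Qed.

Definition flat_seq s (d : V * V) j := nth d (pre s j.+1) j.

Lemma flat_nth s d K j : (forall k, s k != [::]) ->
  (j < size (pre s K))%N -> flat_seq s d j = nth d (pre s K) j.
Proof.
move=> ne jK; rewrite /flat_seq.
have [r1 e1] := pre_prefix s (leq_maxl K j.+1).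
have [r2 e2] := pre_prefix s (leq_maxr K j.+1).
have hj : (j < size (pre s j.+1))%N := pre_size j.+1 ne.
have h1 : nth d (pre s (maxn K j.+1)) j = nth d (pre s K) j by rewrite e1 nth_cat jK.
have h2 : nth d (pre s (maxn K j.+1)) j = nth d (pre s j.+1) j by rewrite e2 nth_cat hj.
by rewrite -h2 h1.
Qed.

Lemma flat_psum s d K : (forall k, s k != [::]) ->
  \sum_(0 <= j < size (pre s K)) box_vol (flat_seq s d j).1 (flat_seq s d j).2
  = \sum_(0 <= k < K) \sum_(q <- s k) box_vol q.1 q.2.
Proof.
move=> ne.
transitivity (\sum_(0 <= j < size (pre s K))
   box_vol (nth d (pre s K) j).1 (nth d (pre s K) j).2).
  by apply: eq_big_nat => j /andP[_ hj]; rewrite (flat_nth d ne hj).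
rewrite -(big_nth d xpredT (fun q => box_vol q.1 q.2)).
by rewrite /pre big_flatten big_map /index_iota subn0.
Qed.

Lemma flat_series s d : (forall k, s k != [::]) ->
  (\sum_(0 <= j <oo) (box_vol (flat_seq s d j).1 (flat_seq s d j).2)%:E <=
   \sum_(0 <= k <oo) (\sum_(q <- s k) box_vol q.1 q.2)%:E)%E.
Proof.
move=> ne; apply: lime_le.
  by apply: is_cvg_nneseries => j _ _; rewrite lee_fin box_vol_ge0.
near=> N.
rewrite sumEFin.
apply: (@le_trans _ _ (\sum_(0 <= j < size (pre s N))
   box_vol (flat_seq s d j).1 (flat_seq s d j).2)%:E).
  rewrite lee_fin (big_cat_nat (leq0n N) (pre_size N ne)) /= lerDl.
  by apply: sumr_ge0 => j _; exact: box_vol_ge0.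
rewrite flat_psum // -sumEFin.
apply: nneseries_lim_ge => k _ _; rewrite lee_fin.
by apply: sumr_ge0 => q _; exact: box_vol_ge0.
Unshelve. all: by end_near.
Qed.

Lemma flat_cover s d (x : V) : (forall k, s k != [::]) ->
  (exists k, exists2 q, q \in s k & box q.1 q.2 x) ->
  exists j, box (flat_seq s d j).1 (flat_seq s d j).2 x.
Proof.
move=> ne [k [q qs xq]].
have mlt := qs; rewrite -index_mem in mlt.
exists (size (pre s k) + index q (s k))%N.
rewrite (@flat_nth _ _ k.+1) ?preS ?nth_cat ?size_cat ?ltn_add2l //.
by rewrite ltnNge leq_addr /= addKn nth_index.
Qed.

Lemma outer_flat E s : (forall k, s k != [::]) ->
  (forall x, E x -> exists k, exists2 q, q \in s k & box q.1 q.2 x) ->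
  (lebesgue_outer E <= \sum_(0 <= k <oo) (\sum_(q <- s k) box_vol q.1 q.2)%:E)%E.
Proof.
move=> ne cov; pose d : V * V := (0, 0).
apply: le_trans (flat_series d ne).
apply: outer_le_cover => x Ex.
by have [j hj] := flat_cover d ne (cov x Ex); exists j.
Qed.

End Outer.
Lemma size_index_ord n : size (index_enum 'I_n) = n.
Proof. by rewrite -[in RHS](card_ord n) cardT enumT /index_enum; case: index_enum_key. Qed.

Section Helpers.
Variable (R : realType).

Lemma prod_le_pow (I : Type) (r : seq I) (F : I -> R) (T : R) :
  (forall i, 0 <= F i <= T) -> \prod_(i <- r) F i <= T ^+ size r.
Proof.
move=> hF; elim: r => [|i r IH]; first by rewrite big_nil expr0.
rewrite big_cons /= exprS; have /andP[h1 h2] := hF i.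
apply: ler_pM => //.
by apply: prodr_ge0 => j _; have /andP[] := hF j.
Qed.

Lemma prod_shift_le (I : Type) (r : seq I) (F : I -> R) (S h : R) :
  (forall i, 0 <= F i <= S) -> 0 <= h <= 1 ->
  \prod_(i <- r) (F i + h) <=
  \prod_(i <- r) F i + h * (size r)%:R * (S + 1) ^+ size r.
Proof.
move=> hF /andP[h0 h1]; elim: r => [|i r IH].
  by rewrite !big_nil /= mulr0 mul0r addr0.
rewrite !big_cons /=.
set P := \prod_(j <- r) F j; set Q := \prod_(j <- r) (F j + h).
set k := size r; set T := (S + 1) ^+ k.
have P0 : 0 <= P by apply: prodr_ge0 => j _; have /andP[] := hF j.
have QT : Q <= T.
  apply: prod_le_pow => j; have /andP[a b] := hF j.
  by rewrite addr_ge0 //= lerD.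
have /andP[Fi0 FiS] := hF i.
have S0 : 0 <= S by apply: le_trans FiS.
have T0 : 0 <= T by rewrite exprn_ge0 // addr_ge0.
have k0 : 0 <= (k%:R : R) by [].
rewrite exprS -/T.
have e1 : (F i + h) * Q <= F i * (P + h * k%:R * T) + h * T.
  rewrite mulrDl lerD //; first by rewrite ler_wpM2l.
  by rewrite ler_wpM2l.
apply: (le_trans e1).
rewrite -[k.+1]addn1 natrD.
have hkT : 0 <= h * k%:R * T by rewrite !mulr_ge0.
have hA : F i * (h * k%:R * T) <= S * (h * k%:R * T) by rewrite ler_wpM2r.
have e : h * (k%:R + 1) * ((S + 1) * T) =
  S * (h * k%:R * T) + h * k%:R * T + S * (h * T) + h * T by ring.
have hB : 0 <= S * (h * T) by rewrite !mulr_ge0.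
rewrite e mulrDr.
move: hA hB hkT; move: (h * k%:R * T) (S * (h * k%:R * T)) (F i * (h * k%:R * T)) (S * (h * T)) (F i * P) (h * T).
move=> *; lra.
Qed.

Lemma exists_h (n : nat) (l : 'I_n -> R) (d : R) : (forall i, 0 <= l i) -> 0 < d ->
  exists h, 0 < h /\ \prod_(i < n) (l i + h) <= \prod_(i < n) l i + d.
Proof.
move=> l0 d0.
set S := \sum_(i < n) l i.
have lS i : 0 <= l i <= S.
  by rewrite l0 /= /S (bigD1 i) //= lerDl sumr_ge0.
have S0 : 0 <= S by apply: sumr_ge0.
set C := n%:R * (S + 1) ^+ n.
have C0 : 0 <= C by rewrite mulr_ge0 // exprn_ge0 // addr_ge0.
set h := Num.min 1 (d / (C + 1)).
have hp : 0 < h by rewrite lt_min ltr01 divr_gt0 // ltr_wpDl.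
have h1 : h <= 1 by rewrite ge_min lexx.
have h2 : h <= d / (C + 1) by rewrite ge_min lexx orbT.
exists h; split => //.
have := @prod_shift_le 'I_n (index_enum 'I_n) l S h lS.
rewrite ltW // h1 => /(_ isT).
rewrite size_index_ord.
move=> /le_trans; apply; rewrite lerD2l -/C -mulrA.
have : h * (C + 1) <= d by rewrite -ler_pdivlMr // ltr_wpDl.
rewrite mulrDr mulr1 -/C => hd.
rewrite -/C; lra.
Qed.

Lemma sum_indic (M N : nat) : (N <= M)%N ->
  \sum_(j < M) ((j < N)%N)%:R = N%:R :> R.
Proof.
move=> NM.
have := @big_ord_widen R 0 +%R N M (fun _ => 1) NM.
rewrite sumr_const card_ord => ->.
by rewrite [in RHS]big_mkcond; apply: eq_bigr => j _; case: (j < N)%N.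
Qed.

End Helpers.
Section Lip.
Variables (R : realType) (n : nat).
Local Notation V := 'rV[R]_n.
Hypothesis hn : (0 < n)%N.
Variables (U : set V) (g : V -> V) (L : R).
Hypothesis hL : 0 < L.
Hypothesis lipg : forall x y, U x -> U y -> enorm (g x - g y) <= L * enorm (x - y).
Variable p : V.

Definition Kc := (2 * L * n%:R) ^+ n.

Lemma Kc_gt0 : 0 < Kc.
Proof. by rewrite exprn_gt0 // !mulr_gt0 // ltr0n. Qed.

Lemma vol_pp : box_vol p p = 0.
Proof.
by rewrite /box_vol (bigD1 (Ordinal hn)) //= subrr maxxx mul0r.
Qed.

Lemma box_img (a b : V) (d : R) : 0 < d ->
  exists s : seq (V * V), [/\ (p, p) \in s,
    (forall x, box a b x -> U x -> exists2 q, q \in s & box q.1 q.2 (g x)) &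
    \sum_(q <- s) box_vol q.1 q.2 <= Kc * (box_vol a b + d)].
Proof.
move=> d0.
pose l i := Num.max 0 (b ord0 i - a ord0 i).
have l0 i : 0 <= l i by rewrite le_max lexx.
have [h [h0 hprod]] := exists_h l0 d0.
pose N i := (Num.trunc (l i / h)).+1.
pose M := (\sum_(i < n) N i)%N.
have NM i : (N i <= M)%N by rewrite /M (bigD1 i) //= leq_addr.
pose lo (t : {ffun 'I_n -> 'I_M}) : V := \row_i (a ord0 i + h * (t i)%:R).
pose hi (t : {ffun 'I_n -> 'I_M}) : V := \row_i (a ord0 i + h * (t i)%:R + h).
pose r := L * n%:R * h.
pose P t x := box (lo t) (hi t) x /\ box a b x /\ U x.
pose img t : V * V := match pselect (exists x, P t x) with
  | left e => let x := projT1 (cid e) in (g x - const_mx r, g x + const_mx r)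
  | right _ => (p, p) end.
exists ((p, p) :: [seq img t | t <- index_enum {ffun 'I_n -> 'I_M}]).
split.
- by rewrite in_cons eqxx.
- move=> x xab Ux.
  have ui i : 0 <= (x ord0 i - a ord0 i) / h.
    by have /andP[h1 _] := xab i; rewrite divr_ge0 ?subr_ge0 // ltW.
  have tlt i : (Num.trunc ((x ord0 i - a ord0 i) / h) < M)%N.
    apply: (leq_trans _ (NM i)); rewrite ltnS; apply: le_truncn.
    rewrite ler_pM2r ?invr_gt0 // le_max; apply/orP; right.
    by have /andP[_ xb] := xab i; rewrite lerD2r.
  pose t := [ffun i => Ordinal (tlt i)].
  have Pt : P t x.
    split; [|split] => // i; rewrite !mxE ffunE /=.
    have := truncn_itv (ui i) => /andP[t1 t2].
    have e : x ord0 i = a ord0 i + h * ((x ord0 i - a ord0 i) / h).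
      by field; rewrite gt_eqF.
    apply/andP; split.
      by rewrite [leRHS]e lerD2l ler_pM2l.
    rewrite [leLHS]e -addrA lerD2l -[X in _ <= _ + X]mulr1 -mulrDr ler_pM2l //.
    by rewrite natr1 ltW.
  exists (img t); first by rewrite in_cons map_f ?mem_index_enum ?orbT.
  rewrite /img; case: pselect => [e|]; last by move=> /(_ (ex_intro _ x Pt)).
  case: (cid e) => x0 [x0c [x0ab Ux0]] /=.
  have cd : enorm (g x - g x0) <= r.
    apply: (le_trans (lipg Ux Ux0)).
    rewrite /r -mulrA ler_pM2l //.
    apply: enorm_le_coord; first exact: ltW.
    move=> i; rewrite !mxE ler_norml.
    have := x0c i; have := Pt.1 i; rewrite !mxE => /andP[u1 u2] /andP[v1 v2].
    apply/andP; split; lra.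
  move=> i; rewrite !mxE; have := coord_le (g x - g x0) i.
  rewrite !mxE => hc; have := le_trans hc cd; rewrite ler_norml => /andP[w1 w2].
  apply/andP; split; lra.
- rewrite big_cons vol_pp add0r big_map.
  apply: (@le_trans _ _ (\sum_(t : {ffun 'I_n -> 'I_M})
      Kc * h ^+ n * \prod_(i < n) ((t i < N i)%N)%:R)).
    apply: ler_sum => t _; rewrite /img; case: pselect => [e|_]; last first.
      have k1 : 0 <= Kc * h ^+ n.
        by apply: mulr_ge0; [exact: ltW Kc_gt0 | exact: exprn_ge0 (ltW h0)].
      have k2 : 0 <= \prod_(i < n) ((t i < N i)%N)%:R :> R.
        by apply: prodr_ge0 => i _; case: (t i < N i)%N.
      by rewrite vol_pp mulr_ge0.
    case: (cid e) => x0 [x0c [x0ab Ux0]] /=.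
    have -> : \prod_(i < n) ((t i < N i)%N)%:R = 1 :> R.
      apply: big1 => i _.
      suff -> : (t i < N i)%N by [].
      rewrite /N ltnS (truncn_ge_nat _ (divr_ge0 (l0 i) (ltW h0))).
      rewrite ler_pdivlMr // mulrC le_max; apply/orP; right.
      have := x0c i; have := x0ab i; rewrite !mxE => /andP[u1 u2] /andP[v1 v2].
      lra.
    rewrite mulr1 /box_vol (eq_bigr (fun _ => 2 * r)); last first.
      move=> i _; rewrite !mxE.
      have hr : 0 <= r.
        by rewrite /r; apply: mulr_ge0; [apply: mulr_ge0; [exact: ltW|exact: ler0n]|exact: ltW].
      rewrite (_ : g x0 ord0 i + r - (g x0 ord0 i - r) = 2 * r); last by ring.
      by rewrite max_r // mulr_ge0.
    by rewrite prodr_const card_ord /Kc /r -exprMn !mulrA.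
  rewrite -mulr_sumr.
  rewrite -(bigA_distr_bigA (fun i (j : 'I_M) => ((j < N i)%N)%:R : R)).
  under eq_bigr do rewrite sum_indic //.
  rewrite -mulrA ler_pM2l ?Kc_gt0 //.
  apply: le_trans hprod.
  have -> : h ^+ n = \prod_(i < n) h by rewrite prodr_const card_ord.
  rewrite -big_split /=.
  apply: ler_prod => i _; apply/andP; split; first by rewrite mulr_ge0 // ltW.
  rewrite /N -natr1 mulrDr mulr1 lerD2r mulrC -ler_pdivlMr //.
  by rewrite truncn_le divr_ge0 // ltW.
Qed.

Lemma outer_lip (T : set V) : T `<=` (g @` U) `|` [set p] ->
  (lebesgue_outer T <= Kc%:E * lebesgue_outer U)%E.
Proof.
move=> TU.
have K0 := Kc_gt0.
have := outer_ge0 U.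
case E: (lebesgue_outer U) => [r| |] // r0; last first.
  by rewrite mulry gtr0_sg // mul1e leey.
apply/lee_addgt0Pr => e e0.
pose eta := e / (2 * Kc).
have eta0 : 0 < eta by rewrite divr_gt0 // mulr_gt0.
have : (lebesgue_outer U < (r + eta)%:E)%E by rewrite E lte_fin ltrDl.
move=> /ereal_inf_lt [_ [a [b [cov ->]]] hlt].
have /choice [s hs] : forall k, exists s : seq (V * V), [/\ (p, p) \in s,
    (forall x, box (a k) (b k) x -> U x -> exists2 q, q \in s & box q.1 q.2 (g x)) &
    \sum_(q <- s) box_vol q.1 q.2 <=
      Kc * (box_vol (a k) (b k) + eta / (2 ^ k.+1)%:R)].
  by move=> k; apply: box_img; rewrite divr_gt0 // ltr0n expn_gt0.
have hne : forall k, s k != [::].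
  by move=> k; have [hp _ _] := hs k; apply/eqP => sk; rewrite sk in hp.
have hcov : forall x, T x -> exists k, exists2 q, q \in s k & box q.1 q.2 x.
  move=> x /TU [[u Uu <-]|->].
    have [k _ hk] := cov u Uu.
    exists k; have [_ hc _] := hs k; exact: hc.
  exists 0%N; exists (p, p); first by have [] := hs 0%N.
  by move=> i /=; rewrite lexx.
apply: (le_trans (outer_flat hne hcov)).
apply: (@le_trans _ _ (\sum_(0 <= k <oo)
    (Kc * (box_vol (a k) (b k) + eta / (2 ^ k.+1)%:R))%:E)%E).
  apply: lee_nneseries.
    by move=> k _ _; rewrite lee_fin sumr_ge0 // => q _; exact: box_vol_ge0.
  by move=> k _; rewrite lee_fin; have [] := hs k.
under eq_eseriesr do rewrite EFinM.
rewrite nneseriesZl; last first.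
  by move=> k _; rewrite lee_fin addr_ge0 ?box_vol_ge0 // divr_ge0 // ltW.
under eq_eseriesr do rewrite EFinD.
apply: (@le_trans _ _ (Kc%:E * (\sum_(0 <= k <oo) (box_vol (a k) (b k))%:E
   + eta%:E))%E).
  rewrite lee_pmul2l ?lte_fin //.
  by apply: epsilon_trick; [move=> k; rewrite lee_fin box_vol_ge0 | exact: ltW].
apply: (@le_trans _ _ (Kc%:E * ((r + eta)%:E + eta%:E))%E).
  rewrite lee_pmul2l ?lte_fin //.
  by rewrite leeD2r // ltW.
rewrite -!EFinD -EFinM lee_fin /eta.
have -> : Kc * (r + e / (2 * Kc) + e / (2 * Kc)) = Kc * r + e.
  by field; rewrite gt_eqF.
by [].
Qed.

End Lip.
Section Mink.
Variables (R : realType) (n : nat).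
Local Notation V := 'rV[R]_n.
Local Open Scope ereal_scope.

Lemma ratio_ge0 (B : set V) s e : 0 <= mink_ratio B s e.
Proof.
apply: mule_ge0; first exact: outer_ge0.
by rewrite lee_fin invr_ge0 powR_ge0.
Qed.

Lemma ratio_transfer (E F : set V) (K L s e : R) : (0 < K)%R -> (0 < L)%R -> (0 < e)%R ->
  lebesgue_outer (eps_nbhd F e) <= K%:E * lebesgue_outer (eps_nbhd E (L * e)) ->
  mink_ratio F s e <= (K * L `^ (n%:R - s))%:E * mink_ratio E s (L * e).
Proof.
move=> K0 L0 e0 h.
rewrite /mink_ratio.
set Ov := lebesgue_outer (eps_nbhd E (L * e)).
set p := (n%:R - s)%R.
have ep : (0 < e `^ p)%R by rewrite powR_gt0.
have Lp : (0 < L `^ p)%R by rewrite powR_gt0.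
rewrite [X in _ <= X]muleCA -EFinM.
have -> : ((K * L `^ p) * ((L * e) `^ p)^-1 = K * (e `^ p)^-1)%R.
  rewrite powRM ?ltW //; field; apply/andP; split; exact: lt0r_neq0.
rewrite EFinM muleA [Ov * _]muleC.
apply: lee_wpmul2r; first by rewrite lee_fin invr_ge0 ltW.
by [].
Qed.

Lemma upper_ge0 (B : set V) s : 0 <= upper_minkowski B s.
Proof.
apply: le_ereal_inf_tmp => _ [d /= d0 <-].
apply: ereal_sup_ge; exists (mink_ratio B s (d / 2)); last exact: ratio_ge0.
exists (d / 2)%R => //=.
by rewrite divr_gt0 // ltr_pdivrMr // ltr_pMr // ltr1n.
Qed.

Lemma lower_ge0 (B : set V) s : 0 <= lower_minkowski B s.
Proof.
apply: ereal_sup_ge; exists (ereal_inf [set mink_ratio B s e | e in [set e : R | (0 < e < 1)%R]])%R.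
  by exists 1%R => //=.
by apply: le_ereal_inf_tmp => _ [e _ <-]; exact: ratio_ge0.
Qed.

Lemma mink_transfer (E F : set V) (K L δ : R) :
  (0 < K)%R -> (0 < L)%R -> (0 < δ)%R ->
  (forall e, (0 < e)%R -> (e < δ)%R ->
     lebesgue_outer (eps_nbhd F e) <= K%:E * lebesgue_outer (eps_nbhd E (L * e))) ->
  forall s, (upper_minkowski E s = 0 -> upper_minkowski F s = 0) /\
            (lower_minkowski E s = 0 -> lower_minkowski F s = 0).
Proof.
move=> K0 L0 d0 hE s.
set C := (K * L `^ (n%:R - s))%R.
have C0 : (0 < C)%R by rewrite mulr_gt0 // powR_gt0.
have tr e : (0 < e)%R -> (e < δ)%R ->
    mink_ratio F s e <= C%:E * mink_ratio E s (L * e).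
  by move=> e0 ed; apply: ratio_transfer => //; exact: hE.
split.
- move=> hU; apply/le_anti; rewrite upper_ge0 andbT.
  apply/lee_addgt0Pr => eta eta0; rewrite add0e.
  have : upper_minkowski E s < (eta / C)%:E by rewrite hU lte_fin divr_gt0.
  move=> /ereal_inf_lt [_ [d /= d0' <-] hd].
  pose d' := (Num.min δ (d / L))%R.
  have d'0 : (0 < d')%R by rewrite lt_min d0 divr_gt0.
  apply: (@le_trans _ _ (ereal_sup [set mink_ratio F s e | e in [set e : R | (0 < e < d')%R]])).
    by apply: ereal_inf_lbound; exists d'.
  apply: ge_ereal_sup => _ [e /= /andP[e0 ed] <-].
  have ed1 : (e < δ)%R by apply: (lt_le_trans ed); rewrite ge_min lexx.
  have ed2 : (L * e < d)%R.
    by rewrite mulrC -ltr_pdivlMr //; apply: (lt_le_trans ed); rewrite ge_min lexx orbT.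
  apply: (le_trans (tr e e0 ed1)).
  have : mink_ratio E s (L * e) <= (eta / C)%:E.
    apply: ltW; apply: le_lt_trans hd; apply: ereal_sup_ubound.
    by exists (L * e)%R => //=; rewrite ed2 mulr_gt0.
  move=> /(lee_wpmul2l (x := C%:E)); rewrite lee_fin ltW // => /(_ isT).
  move=> /le_trans; apply; rewrite -EFinM lee_fin.
  by rewrite mulrC divfK // gt_eqF.
- move=> hL; apply/le_anti; rewrite lower_ge0 andbT.
  apply: ge_ereal_sup => _ [d /= d0' <-].
  apply/lee_addgt0Pr => eta eta0; rewrite add0e.
  pose m := Num.min δ d.
  have m0 : (0 < m)%R by rewrite lt_min d0 d0'.
  have : ereal_inf [set mink_ratio E s e | e in [set e : R | (0 < e < L * m)%R]] < (eta / C)%:E.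
    apply: (@le_lt_trans _ _ 0); last by rewrite lte_fin divr_gt0.
    rewrite -hL; apply: ereal_sup_ubound; exists (L * m)%R => //=.
    by rewrite mulr_gt0.
  move=> /ereal_inf_lt [_ [e' /= /andP[e'0 e'm] <-] he'].
  pose e := (e' / L)%R.
  have e0 : (0 < e)%R by rewrite divr_gt0.
  have em : (e < m)%R by rewrite ltr_pdivrMr // mulrC.
  have ee : (L * e = e')%R by rewrite /e mulrC divfK // gt_eqF.
  apply: (@le_trans _ _ (mink_ratio F s e)).
    apply: ereal_inf_lbound; exists e => //=; rewrite e0 /=.
    by apply: (lt_le_trans em); rewrite ge_min lexx orbT.
  have ed1 : (e < δ)%R by apply: (lt_le_trans em); rewrite ge_min lexx.
  apply: (le_trans (tr e e0 ed1)); rewrite ee.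
  move: he' => /ltW /(lee_wpmul2l (x := C%:E)); rewrite lee_fin ltW // => /(_ isT).
  move=> /le_trans; apply; rewrite -EFinM lee_fin.
  by rewrite mulrC divfK // gt_eqF.
Qed.

Lemma dims_eq (E F : set V) :
  (forall s, upper_minkowski E s = 0 <-> upper_minkowski F s = 0) ->
  (forall s, lower_minkowski E s = 0 <-> lower_minkowski F s = 0) ->
  upper_box_dim E = upper_box_dim F /\ lower_box_dim E = lower_box_dim F.
Proof.
move=> hu hl; split.
- rewrite /upper_box_dim; congr ereal_inf; congr image.
  by apply/seteqP; split => s [s0 h]; split => //; apply/hu.
- rewrite /lower_box_dim; congr ereal_inf; congr image.
  by apply/seteqP; split => s [s0 h]; split => //; apply/hl.
Qed.

End Mink.
Section Geo.
Variables (R : realType) (n : nat).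
Local Notation V := 'rV[R]_n.
Local Notation Phi := (@inversion R n 0).

Lemma le_mul1 (a c : V) (d : R) : 0 < d -> d <= enorm a ->
  enorm (a - c) <= enorm a * (1 + enorm c / d).
Proof.
move=> d0 da; apply: (le_trans (enormB_le a c)).
rewrite mulrDr mulr1 lerD2l mulrA ler_pdivlMr //.
by rewrite [X in X <= _]mulrC ler_wpM2r ?enorm_ge0.
Qed.

Lemma frac_le (p q r s : R) : 0 < q -> 0 < s -> p * s <= r * q -> p / q <= r / s.
Proof.
move=> q0 s0 h; rewrite ler_pdivlMr // mulrAC ler_pdivrMr //.
Qed.

Lemma frac_bound (X Y W d : R) : 0 < d -> 0 < W -> 0 < X ->
  X <= Y * (1 + W / d) -> 2 * (d / (d + W) / W / 2) <= Y / (X * W).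
Proof.
move=> d0 W0 X0 h.
have dW : 0 < d + W by rewrite addr_gt0.
have -> : 2 * (d / (d + W) / W / 2) = d / ((d + W) * W).
  by field; rewrite !gt_eqF.
apply: frac_le; rewrite ?mulr_gt0 //.
have hX' : d * X <= Y * (d + W).
  have := ler_wpM2l (ltW d0) h.
  have -> : d * (Y * (1 + W / d)) = Y * (d + W) by field; rewrite gt_eqF.
  by [].
by rewrite mulrA [Y * _]mulrA ler_wpM2r // ltW.
Qed.

Lemma enorm_rV0 (x : V) : n = 0%N -> enorm x = 0.
Proof.
move=> n0; rewrite /enorm big1 ?sqrtr0 // => i _; exfalso.
by move: (ltn_ord i); move: (nat_of_ord i) => k; rewrite n0.
Qed.

Lemma geo (A : set V) (w : V) (d0 dw : R) :
  0 < d0 -> 0 < dw -> (forall a, A a -> d0 <= enorm a) ->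
  (forall a, A a -> dw <= enorm (a - w)) ->
  exists K L δ, [/\ 0 < K, 0 < L, 0 < δ & forall e, 0 < e -> e < δ ->
    (lebesgue_outer (eps_nbhd (inversion w @` A) e) <=
     K%:E * lebesgue_outer (eps_nbhd (Phi @` A) (L * e)))%E].
Proof.
move=> d0p dwp hd0 hdw.
have triv : inversion w @` A = Phi @` A -> exists K L δ, [/\ 0 < K, 0 < L, 0 < δ &
    forall e, 0 < e -> e < δ ->
    (lebesgue_outer (eps_nbhd (inversion w @` A) e) <=
     K%:E * lebesgue_outer (eps_nbhd (Phi @` A) (L * e)))%E].
  by move=> ->; exists 1, 1, 1; split => // e _ _; rewrite mul1r mul1e.
have [n0|nP] := posnP n.
  apply: triv.
  have -> : A = set0.
    apply/seteqP; split => // a Aa; have := hd0 a Aa.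
    by rewrite enorm_rV0 // => /(lt_le_trans d0p); rewrite ltxx.
  by rewrite !image_set0.
have [w0|w0] := eqVneq w 0; first by apply: triv; rewrite w0.
set W := enorm w.
have Wp : 0 < W := enorm_gt0 w0.
have a0 a : A a -> a != 0.
  move=> Aa; apply/eqP => a0; have := hd0 a Aa.
  by rewrite a0 enorm0 => /(lt_le_trans d0p); rewrite ltxx.
have aw a : A a -> a != w.
  move=> Aa; apply/eqP => aw; have := hdw a Aa.
  by rewrite aw subrr enorm0 => /(lt_le_trans dwp); rewrite ltxx.
pose rho := dw / (dw + W) / W / 2.
pose sig := d0 / (d0 + W) / W / 2.
have rhop : 0 < rho by rewrite !divr_gt0 // addr_gt0.
have sigp : 0 < sig by rewrite !divr_gt0 // addr_gt0.
have hrho a : A a -> 2 * rho <= enorm (Phi a - Phi w).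
  move=> Aa; rewrite Phi_dist // ?a0 //.
  apply: frac_bound => //; first by rewrite enorm_gt0 ?a0.
  have := le_mul1 (- w) dwp (hdw a Aa).
  by rewrite opprK subrK enormN -/W.
have hsig a : A a -> 2 * sig <= enorm (inversion w a + Phi w).
  move=> Aa; rewrite invE -[Phi w]opprK -PhiN Phi_dist ?oppr_eq0 ?subr_eq0 ?aw //.
  rewrite opprK subrK enormN.
  apply: frac_bound => //; first by rewrite enorm_gt0 // subr_eq0 aw.
  by have := le_mul1 w d0p (hd0 a Aa); rewrite -/W.
pose Lg := (W ^+ 2 * rho ^+ 2)^-1.
pose Lh := (W ^+ 2 * sig ^+ 2)^-1.
have Lgp : 0 < Lg by rewrite invr_gt0 mulr_gt0 // exprn_gt0.
have Lhp : 0 < Lh by rewrite invr_gt0 mulr_gt0 // exprn_gt0.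
pose δ := Num.min sig (rho / Lh).
exists (Kc n Lg), Lh, δ; split.
- exact: Kc_gt0.
- exact: Lhp.
- by rewrite lt_min sigp divr_gt0.
move=> e e0 eδ.
have es : e < sig by apply: (lt_le_trans eδ); rewrite ge_min lexx.
have eL : Lh * e < rho.
  by rewrite mulrC -ltr_pdivlMr //; apply: (lt_le_trans eδ); rewrite ge_min lexx orbT.
pose Ve := eps_nbhd (Phi @` A) (Lh * e) `&` [set x | rho <= enorm (x - Phi w)].
apply: (@le_trans _ _ ((Kc n Lg)%:E * lebesgue_outer Ve)%E).
  apply: (@outer_lip R n nP Ve (G w) Lg Lgp _ 0).
  - move=> x z [_ hx] [_ hz].
    have xw : x != Phi w.
      apply/eqP => xw; move: hx; rewrite /= xw subrr enorm0 => /(lt_le_trans rhop).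
      by rewrite ltxx.
    have zw : z != Phi w.
      apply/eqP => zw; move: hz; rewrite /= zw subrr enorm0 => /(lt_le_trans rhop).
      by rewrite ltxx.
    rewrite G_dist // [X in _ <= X]mulrC.
    apply: ler_wpM2l; first exact: enorm_ge0.
    have xp : 0 < enorm (x - Phi w) by rewrite enorm_gt0 // subr_eq0.
    have zp : 0 < enorm (z - Phi w) by rewrite enorm_gt0 // subr_eq0.
    have D0 : 0 < W ^+ 2 * enorm (x - Phi w) * enorm (z - Phi w).
      by rewrite !mulr_gt0 // exprn_gt0.
    have D1 : 0 < W ^+ 2 * rho ^+ 2 by rewrite mulr_gt0 // exprn_gt0.
    rewrite /Lg lef_pV2 ?posrE //.
    rewrite -mulrA; apply: ler_wpM2l; first by rewrite exprn_ge0 // ltW.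
    by rewrite expr2; apply: ler_pM => //; apply: ltW.
  - move=> y [b [a Aa <-] hyb]; left.
    have hs := hsig a Aa.
    have yw : sig <= enorm (y + Phi w).
      have := enorm_rev_tri (inversion w a + Phi w) (inversion w a - y).
      rewrite (_ : _ - (inversion w a - y) = y + Phi w); last first.
        by rewrite opprB addrC addrA subrK addrC.
      have : enorm (inversion w a - y) < sig by rewrite enormB (lt_trans hyb).
      move=> h1 h2; apply: le_trans h2.
      lra.
    have yw' : y != - Phi w.
      apply/eqP => yw'; move: yw; rewrite yw' addNr enorm0 => /(lt_le_trans sigp).
      by rewrite ltxx.
    have aw' : inversion w a != - Phi w.
      apply/eqP => aw'; move: hs; rewrite aw' addNr enorm0.
      have : 0 < 2 * sig by rewrite mulr_gt0.
      by move=> h /(lt_le_trans h); rewrite ltxx.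
    exists (G (- w) y); last exact: GK.
    have dist : enorm (G (- w) y - Phi a) < Lh * e.
      rewrite -(G_inv (aw a Aa)) G_dist ?oppr_eq0 // ?PhiN //.
      rewrite enormN !opprK -/W.
      apply: (@le_lt_trans _ _ (enorm (y - inversion w a) * Lh)); last first.
        by rewrite mulrC ltr_pM2l.
      apply: ler_wpM2l; first exact: enorm_ge0.
      have p1 : 0 < enorm (y + Phi w) by apply: lt_le_trans yw.
      have p2 : 0 < enorm (inversion w a + Phi w).
        by apply: (lt_le_trans _ hs); rewrite mulr_gt0.
      have D0 : 0 < W ^+ 2 * enorm (y + Phi w) * enorm (inversion w a + Phi w).
        by rewrite !mulr_gt0 // exprn_gt0.
      have D1 : 0 < W ^+ 2 * sig ^+ 2 by rewrite mulr_gt0 // exprn_gt0.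
      rewrite /Lh lef_pV2 ?posrE //.
      rewrite -mulrA; apply: ler_wpM2l; first by rewrite exprn_ge0 // ltW.
      rewrite expr2; apply: ler_pM => //; try exact: ltW.
      by apply: le_trans hs; lra.
    split; first by exists (Phi a) => //; exists a.
    rewrite /=.
    have := enorm_rev_tri (Phi a - Phi w) (Phi a - G (- w) y).
    rewrite (_ : _ - (Phi a - G (- w) y) = G (- w) y - Phi w); last first.
      by rewrite opprB addrC addrA subrK.
    move=> h; rewrite [enorm (Phi a - G (- w) y)]enormB in h.
    have := hrho a Aa; move: (lt_trans dist eL) h; lra.
- apply: lee_wpmul2l; first by rewrite lee_fin ltW // Kc_gt0.
  by apply: outer_mono => x [].
Qed.

End Geo.
Lemma not_closure_dist (R : realType) (n : nat) (A : set 'rV[R]_n) (x : 'rV[R]_n) :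
  ~ closure A x -> exists2 r, 0 < r & forall a, A a -> r <= enorm (a - x).
Proof.
move=> hc; apply: contrapT => hne; apply: hc => B /nbhs_ballP [e e0 eB].
have : ~ (forall a, A a -> e <= enorm (a - x)) by move=> h; apply: hne; exists e.
move=> /existsNP [a /not_implyP [Aa /negP]]; rewrite -ltNge => ha.
exists a; split => //; apply: eB.
rewrite mx_norm_ball /ball_ /=.
rewrite -[`|_|]/(mx_norm _) mx_normrE.
apply: bigmax_lt => // -[i j] _ /=; rewrite !mxE (ord1 i).
apply: le_lt_trans ha; rewrite -normrN opprB.
by have := coord_le (a - x) j; rewrite !mxE.
Qed.

Theorem proposition2p4 (R : realType) (n : nat) (A : set 'rV[R]_n) (w : 'rV[R]_n)
  (h0 : ~ closure A 0) (hw : ~ closure A w) :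
  let Phi := inversion 0 in
  let Psi := inversion w in
  bi_lipschitz_on (Phi @` A) (Psi \o Phi) /\
  upper_box_dim (Phi @` A) = upper_box_dim (Psi @` A) /\
  lower_box_dim (Phi @` A) = lower_box_dim (Psi @` A).
Proof.
move=> Phi Psi; rewrite /Phi /Psi {Phi Psi}.
have [d0 d0p hd0'] := not_closure_dist h0.
have hd0 a : A a -> d0 <= enorm a by move=> Aa; have := hd0' a Aa; rewrite subr0.
have [dw dwp hdw] := not_closure_dist hw.
have a0 a : A a -> a != 0.
  move=> Aa; apply/eqP => a0; have := hd0 a Aa.
  by rewrite a0 enorm0 => /(lt_le_trans d0p); rewrite ltxx.
have aw a : A a -> a != w.
  move=> Aa; apply/eqP => aw; have := hdw a Aa.
  by rewrite aw subrr enorm0 => /(lt_le_trans dwp); rewrite ltxx.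
split.
  set W := enorm w.
  have W0 : 0 <= W by exact: enorm_ge0.
  pose al := 1 + W / d0.
  pose be := 1 + W / dw.
  have alp : 0 < al by apply: (lt_le_trans ltr01); rewrite lerDl divr_ge0 // ltW.
  have bep : 0 < be by apply: (lt_le_trans ltr01); rewrite lerDl divr_ge0 // ltW.
  exists (al ^+ 2)^-1, (be ^+ 2); split; first by rewrite invr_gt0 exprn_gt0.
  split; first by rewrite exprn_gt0.
  move=> _ _ [a Aa <-] [b Ab <-] /=; rewrite !PhiK.
  have awa : a - w != 0 by rewrite subr_eq0 aw.
  have awb : b - w != 0 by rewrite subr_eq0 aw.
  rewrite [inversion w a]invE [inversion w b]invE (Phi_dist awa awb) (Phi_dist (a0 a Aa) (a0 b Ab)).
  rewrite (_ : a - w - (b - w) = a - b); last by rewrite opprB addrA subrK.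
  set X := enorm (a - b).
  have X0 : 0 <= X by exact: enorm_ge0.
  have Pp : 0 < enorm a * enorm b by rewrite mulr_gt0 // enorm_gt0 ?a0.
  have Qp : 0 < enorm (a - w) * enorm (b - w).
    by rewrite mulr_gt0 // enorm_gt0 // subr_eq0 aw.
  have ha : enorm (a - w) <= enorm a * al by have := le_mul1 w d0p (hd0 a Aa).
  have hb : enorm (b - w) <= enorm b * al by have := le_mul1 w d0p (hd0 b Ab).
  have ha' : enorm a <= enorm (a - w) * be.
    by have := le_mul1 (- w) dwp (hdw a Aa); rewrite opprK subrK enormN.
  have hb' : enorm b <= enorm (b - w) * be.
    by have := le_mul1 (- w) dwp (hdw b Ab); rewrite opprK subrK enormN.
  have QP : enorm (a - w) * enorm (b - w) <= al ^+ 2 * (enorm a * enorm b).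
    rewrite (_ : al ^+ 2 * (enorm a * enorm b) = (enorm a * al) * (enorm b * al)).
      by apply: ler_pM => //; exact: enorm_ge0.
    by rewrite expr2; ring.
  have PQ : enorm a * enorm b <= be ^+ 2 * (enorm (a - w) * enorm (b - w)).
    rewrite (_ : be ^+ 2 * _ = (enorm (a - w) * be) * (enorm (b - w) * be)).
      by apply: ler_pM => //; exact: enorm_ge0.
    by rewrite expr2; ring.
  split.
    rewrite (_ : (al ^+ 2)^-1 * (X / (enorm a * enorm b)) =
                 X / (al ^+ 2 * (enorm a * enorm b))); last first.
      have haP : 0 < enorm a by rewrite enorm_gt0 ?a0.
      have hbP : 0 < enorm b by rewrite enorm_gt0 ?a0.
      by field; nzt.
    apply: frac_le => //; first by rewrite mulr_gt0 // exprn_gt0.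
    by apply: ler_wpM2l.
  rewrite (_ : be ^+ 2 * (X / (enorm a * enorm b)) =
               (be ^+ 2 * X) / (enorm a * enorm b)); last by rewrite mulrA.
  apply: frac_le => //.
  rewrite [be ^+ 2 * X]mulrC -mulrA; apply: ler_wpM2l => //.
have [K1 [L1 [δ1 [K1p L1p δ1p h1]]]] := geo d0p dwp hd0 hdw.
pose A' := (fun a => a - w) @` A.
have hA'0 a' : A' a' -> dw <= enorm a' by move=> [a Aa <-]; exact: hdw.
have hA'w a' : A' a' -> d0 <= enorm (a' - - w).
  by move=> [a Aa <-]; rewrite opprK subrK; exact: hd0.
have [K2 [L2 [δ2 [K2p L2p δ2p h2]]]] := geo dwp d0p hA'0 hA'w.
have eA1 : inversion (- w) @` A' = inversion 0 @` A.
  apply/seteqP; split => x.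
    by move=> [_ [a Aa <-] <-]; exists a => //; rewrite [inversion (- w) _]invE opprK subrK.
  by move=> [a Aa <-]; exists (a - w); [exists a | rewrite [inversion (- w) _]invE opprK subrK].
have eA2 : inversion 0 @` A' = inversion w @` A.
  apply/seteqP; split => x.
    by move=> [_ [a Aa <-] <-]; exists a => //; rewrite [inversion w a]invE.
  by move=> [a Aa <-]; exists (a - w); [exists a | rewrite [inversion w a]invE].
rewrite eA1 eA2 in h2.
apply: dims_eq => s; split.
- by apply: (mink_transfer K1p L1p δ1p h1 s).1.
- by apply: (mink_transfer K2p L2p δ2p h2 s).1.
- by apply: (mink_transfer K1p L1p δ1p h1 s).2.
- by apply: (mink_transfer K2p L2p δ2p h2 s).2.
Qed.
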